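(* Fix $k\in\{1,\dots,n\}$ and let $A\subseteq P_{\{1,\dots,k\}}M_n(\mathbb{C})$ be a set such that $E_{m,m}\in A$ for every $m\in\{1,\dots,k\}$, and such that for every nonempty subset $J\subseteq\{1,\dots,k\}$ we have $P_J\,A\,(1_n-P_J)\neq\{0\}$. Then for every $t\in\{1,\dots,k\}$ the algebra generated by $A$ contains an element $S$ such that $S(t,l)\neq 0$ for some $l\in\{k+1,\dots,n\}$.
   Context: $E_{i,j}$ denote the matrix units of $M_n(\mathbb{C})$, $1_n$ is the identity matrix, and for $J\subseteq\{1,\dots,n\}$, $P_J=\sum_{i\in J}E_{i,i}$. For a matrix $a$, $a(i,j)$ denotes its $(i,j)$ entry. $P_J A(1_n-P_J)$ denotes the set $\{P_Ja(1_n-P_J): a\in A\}$. *)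

(* Defs.v *)
(* Complex numbers C are modelled by an arbitrary
   numClosedFieldType (algebraically closed field of char 0 with
   conjugation/order), e.g. algC. *)
From HB Require Import structures.
From mathcomp Require Import all_boot all_order all_algebra.
Set Implicit Arguments. Unset Strict Implicit. Unset Printing Implicit Defensive.
Import Order.TTheory GRing.Theory Num.Theory.
Local Open Scope ring_scope.

Definition projJ (R : nzRingType) (n : nat) (J : {set 'I_n}) : 'M[R]_n :=
  \matrix_(i, j) ((i == j) && (i \in J))%:R.

Inductive gen_alg (R : nzRingType) (n : nat) (A : 'M[R]_n -> Prop)
  : 'M[R]_n -> Prop :=
| gen_base a : A a -> gen_alg A a
| gen_add a b : gen_alg A a -> gen_alg A b -> gen_alg A (a + b)
| gen_scale (c : R) a : gen_alg A a -> gen_alg A (c *: a)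
| gen_mul a b : gen_alg A a -> gen_alg A b -> gen_alg A (a *m b).

(* Main.v *)
Require Import Defs.
From HB Require Import structures.
From mathcomp Require Import all_boot all_order all_algebra.
From Stdlib Require Import Classical ClassicalEpsilon.
Import Order.TTheory GRing.Theory Num.Theory.
Local Open Scope ring_scope.

Definition decP (P : Prop) : bool :=
  if excluded_middle_informative P then true else false.

Lemma decPP (P : Prop) : decP P = true <-> P.
Proof. rewrite /decP; case: excluded_middle_informative => //. Qed.

Lemma projJ_l (C : nzRingType) n (J : {set 'I_n}) (a : 'M[C]_n) i j :
  (@projJ C n J *m a) i j = if i \in J then a i j else 0.
Proof.
rewrite mxE (bigD1 i) //= big1 => [|m Hm]; rewrite !mxE ?eqxx /=.
  by case: (i \in J); rewrite ?mul1r ?mul0r addr0.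
by rewrite eq_sym (negbTE Hm) mul0r.
Qed.

Lemma projJ_r (C : nzRingType) n (J : {set 'I_n}) (a : 'M[C]_n) i j :
  (a *m @projJ C n J) i j = if j \in J then a i j else 0.
Proof.
rewrite mxE (bigD1 j) //= big1 => [|m Hm]; rewrite !mxE ?eqxx /=.
  by case: (j \in J); rewrite ?mulr1 ?mulr0 addr0.
by rewrite (negbTE Hm) mulr0.
Qed.

Lemma delta_entry (C : nzRingType) n (S a : 'M[C]_n) i t j :
  (S *m delta_mx i i *m a) t j = S t i * a i j.
Proof.
have E : forall m, (delta_mx i i *m a) m j = if m == i then a i j else 0.
  move=> m; rewrite mxE (bigD1 i) //= big1 => [|p Hp].
    rewrite !mxE eqxx andbT addr0; case: (m == i); by rewrite ?mul1r ?mul0r.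
  by rewrite !mxE (negbTE Hp) andbF mul0r.
rewrite -mulmxA mxE (bigD1 i) //= big1 => [|m Hm].
  by rewrite addr0 E eqxx.
by rewrite E (negbTE Hm) mulr0.
Qed.

Theorem lemma5 (C : numClosedFieldType) (n k : nat)
  (hk1 : (1 <= k)%N) (hkn : (k <= n)%N)
  (A : 'M[C]_n -> Prop)
  (hA : forall a, A a ->
          exists b : 'M[C]_n, a = @projJ C n [set i : 'I_n | (i < k)%N] *m b)
  (hE : forall m : 'I_n, (m < k)%N -> A (delta_mx m m))
  (hJ : forall J : {set 'I_n},
          J != set0 -> J \subset [set i : 'I_n | (i < k)%N] ->
          exists a, A a /\ @projJ C n J *m a *m (1%:M - @projJ C n J) != 0) :
  forall t : 'I_n, (t < k)%N ->
    exists S : 'M[C]_n, gen_alg A S /\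
      exists l : 'I_n, (k <= l)%N /\ S t l != 0.
Proof.
move=> t tk; apply: NNPP => Hno.
pose J := [set i : 'I_n | (i < k)%N &&
             decP (exists S, gen_alg A S /\ S t i != 0)].
have tJ : t \in J.
  rewrite inE tk /=; apply/decPP; exists (delta_mx t t); split.
    by apply: gen_base; apply: hE.
  by rewrite mxE !eqxx oner_neq0.
have J0 : J != set0 by apply/set0Pn; exists t.
have JK : J \subset [set i : 'I_n | (i < k)%N].
  by apply/subsetP => x; rewrite !inE => /andP[].
have [a [Aa Ha]] := hJ J J0 JK.
have [i [j Hij]] : exists i j, (@projJ C n J *m a *m (1%:M - @projJ C n J)) i j != 0.
  apply: NNPP => H; move/eqP: Ha; apply; apply/matrixP => i j.
  apply/eqP; rewrite [X in _ == X]mxE; apply: NNPP => H2; apply: H; exists i, j; exact/negP.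
have subE : forall (X Y : 'M[C]_n) p q, (X - Y) p q = X p q - Y p q by move=> *; rewrite !mxE.
move: Hij; rewrite mulmxBr mulmx1 subE projJ_r !projJ_l.
case iJ: (i \in J); last by case: (j \in J); rewrite ?subrr ?subr0 eqxx.
case jJ: (j \in J); first by rewrite subrr eqxx.
rewrite subr0 => aij.
move: (iJ); rewrite inE => /andP[ik /decPP [S [gS Sti]]].
have gT : gen_alg A (S *m delta_mx i i *m a).
  apply: gen_mul; last exact: gen_base.
  apply: gen_mul => //; apply: gen_base; exact: hE.
have Tne : (S *m delta_mx i i *m a) t j != 0 by rewrite delta_entry mulf_neq0.
case: (leqP k j) => jk.
  by apply: Hno; exists (S *m delta_mx i i *m a); split => //; exists j.
move: jJ; rewrite inE jk /=; move/negbT/negP; apply; apply/decPP.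
by exists (S *m delta_mx i i *m a).
Qed.
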